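(* Let $q$ be a prime power and let $n,k,r$ be integers with $3\le k\le n-2\le q-2$ and $1\le r\le k-1$. Let $\alpha_1,\dots,\alpha_n\in\mathbb{F}_q$ be pairwise distinct. Let $C_{k-r,k-r-1}$ be the linear code generated by the $k\times n$ matrix $G_{k-r,k-r-1}$ whose rows are $(\alpha_1^{e},\dots,\alpha_n^{e})$ for $e=0,1,\dots,k-r-2$ and $e=k-r+1,k-r+2,\dots,k+1$. Then $C_{k-r,k-r-1}$ is MDS if and only if $$\sigma_{r+1}(\beta_1,\dots,\beta_k)^2-\sigma_r(\beta_1,\dots,\beta_k)\,\sigma_{r+2}(\beta_1,\dots,\beta_k)\neq 0$$ for every $k$-element subset $\{\beta_1,\dots,\beta_k\}\subseteq\{\alpha_1,\dots,\alpha_n\}$ (with distinct $\beta_i$).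
   Context: Convention: $0^0=1$. $\sigma_t(x_1,\dots,x_m)$ is the $t$-th elementary symmetric polynomial, with $\sigma_0=1$ and $\sigma_t=0$ for $t>m$. A linear code is MDS if its parameters $[n,k,d]$ satisfy $d=n-k+1$. *)

(* Defs.v *)
From HB Require Import structures.
From mathcomp Require Import all_boot all_order all_algebra all_field.
Set Implicit Arguments. Unset Strict Implicit. Unset Printing Implicit Defensive.
Import Order.TTheory GRing.Theory Num.Theory.
Local Open Scope ring_scope.

Definition wt (F : fieldType) (n : nat) (c : 'rV[F]_n) : nat :=
  #|[set i : 'I_n | c 0 i != 0]|.

(* The linear code generated by G is its row space; a codeword c satisfies (c <= G)%MS. *)
Definition min_dist (F : finFieldType) (m n : nat) (G : 'M[F]_(m, n)) : nat :=
  \big[minn/n]_(c : 'rV[F]_n | (c <= G)%MS && (c != 0)) wt c.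

Definition is_MDS (F : finFieldType) (m n : nat) (G : 'M[F]_(m, n)) : Prop :=
  min_dist G = (n - \rank G + 1)%N.

Definition elsym (F : fieldType) (n : nat) (a : 'I_n -> F) (S : {set 'I_n}) (t : nat) : F :=
  \sum_(T : {set 'I_n} | (T \subset S) && (#|T| == t)) \prod_(i in T) a i.

(* exponent of row i of G_{k-r,k-r-1}: 0..k-r-2, then k-r+1..k+1 *)
Definition gexp (k r : nat) (i : nat) : nat :=
  if (i < k - r - 1)%N then i else (i + 2)%N.

Definition Gmat (F : fieldType) (n k r : nat) (alpha : 'I_n -> F) : 'M[F]_(k, n) :=
  \matrix_(i < k, j < n) alpha j ^+ gexp k r i.

(* Main.v *)
Require Import Defs.
From HB Require Import structures.
From mathcomp Require Import all_boot all_order all_algebra all_field.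
From mathcomp Require Import zify ring.
Import GRing.Theory.
Local Open Scope ring_scope.

Section Elsym.
Variables (F : fieldType) (n : nat) (a : 'I_n -> F).

Lemma elsym_big (S : {set 'I_n}) t : (#|S| < t)%N -> elsym a S t = 0.
Proof.
move=> lt; rewrite /elsym big1 // => T /andP[/subset_leq_card le /eqP e].
by move: le lt; rewrite e => le lt; exfalso; lia.
Qed.

Lemma coef_prodS (S : {set 'I_n}) j : (j <= #|S|)%N ->
  (\prod_(i in S) ('X - (a i)%:P))`_j =
  (-1) ^+ (#|S| - j) * elsym a S (#|S| - j).
Proof.
move=> hj.
rewrite big_mkcond /=.
have -> : \prod_(i < n) (if i \in S then 'X - (a i)%:P else 1) =
    \prod_i ((if i \in S then - (a i)%:P else 0) + (if i \in S then 'X else 1)).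
  by apply: eq_bigr => i _; case: (i \in S); [rewrite addrC | rewrite add0r].
rewrite bigA_distr coef_sum /elsym mulr_sumr [RHS]big_mkcond /=.
apply: eq_bigr => J _.
case: (boolP (J \subset S)) => sJ /=; last first.
  have [i iJ iS] := subsetPn sJ.
  by rewrite (bigD1 i) //= iJ (negbTE iS) mul0r coef0.
rewrite (bigID (mem J)) /=.
rewrite (eq_bigr (fun i => (- a i)%:P)); last first.
  by move=> i iJ; rewrite iJ (subsetP sJ _ iJ) polyCN.
rewrite [X in _ * X](eq_bigr (fun i => if i \in S then 'X else 1)); last first.
  by move=> i iJ; rewrite (negbTE iJ).
rewrite -big_mkcondr /=.
rewrite [X in _ * X](eq_bigl (fun i => i \in S :\: J)); last by move=> i; rewrite !inE.
rewrite prodr_const -rmorph_prod coefCM coefXn cardsD (setIidPr sJ) prodrN.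
have le := subset_leq_card sJ.
have -> : (j == #|S| - #|J|)%N = (#|J| == #|S| - j)%N.
  apply/eqP/eqP; lia.
case: eqP => [->|_]; by rewrite ?mulr1 ?mulr0.
Qed.

End Elsym.

Lemma min_le (T : finType) (P : pred T) (w : T -> nat) (N : nat) c0 :
  P c0 -> (\big[minn/N]_(c | P c) w c <= w c0)%N.
Proof.
move=> Pc0; have : c0 \in index_enum T by rewrite mem_index_enum.
elim: (index_enum T) => // x s IH; rewrite inE big_cons.
case/orP => [/eqP <-| /IH h]; first by rewrite Pc0 geq_minl.
by case: (P x) => //; apply: leq_trans h; rewrite geq_minr.
Qed.

Lemma sub_card (T : finType) (A : {set T}) t : (t <= #|A|)%N ->
  exists2 S : {set T}, S \subset A & #|S| = t.
Proof.
move=> h; exists [set x in take t (enum A)].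
  by apply/subsetP => x; rewrite inE => /mem_take; rewrite mem_enum.
rewrite cardsE; have /card_uniqP -> := take_uniq t (enum_uniq (mem A)).
by rewrite size_takel // -cardE.
Qed.

Lemma poly_le2 (F : fieldType) (q : {poly F}) : (size q <= 2)%N ->
  q = (q`_0)%:P + (q`_1)%:P * 'X.
Proof.
move=> h; apply/polyP => i; rewrite coefD coefC coefCM coefX.
case: i => [|[|i]] /=; rewrite ?mulr0 ?mulr1 ?addr0 ?add0r //.
by rewrite nth_default //; apply: leq_trans h _.
Qed.

Lemma arith1 (a b N K : nat) : (K <= N)%N -> (a + b)%N = N -> (b < N - K + 1)%N -> (K <= a)%N.
Proof. lia. Qed.

Section Main.
Variables (F : finFieldType) (n k r : nat) (alpha : 'I_n -> F).
Hypotheses (hk : (3 <= k)%N) (hkn : (k + 2 <= n)%N) (hr1 : (1 <= r)%N)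
  (hrk : (r <= k - 1)%N) (ainj : injective alpha).

Local Notation G := (Gmat k r alpha).
Local Notation m := (k - r - 1)%N.
Local Notation ge := (gexp k r).

Definition fv (v : 'rV[F]_k) : {poly F} := \sum_(i < k) v 0 i *: 'X^(gexp k r i).

Lemma gexp_inj i j : ge i = ge j -> i = j.
Proof. by rewrite /gexp; case: (ltnP i m) => hi; case: (ltnP j m) => hj; lia. Qed.

Lemma gexp_m i : ge i != m.
Proof. by rewrite /gexp; case: (ltnP i m) => hi; apply/eqP; lia. Qed.

Lemma gexp_m1 i : ge i != m.+1.
Proof. by rewrite /gexp; case: (ltnP i m) => hi; apply/eqP; lia. Qed.

Lemma gexp_lt (i : 'I_k) : (ge i < k + 2)%N.
Proof. by rewrite /gexp; case: (ltnP i m) => hi; have := ltn_ord i; lia. Qed.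

Lemma gexp_surj j : (j < k + 2)%N -> j != m -> j != m.+1 ->
  exists i : 'I_k, ge i = j.
Proof.
move=> h1 /eqP h2 /eqP h3.
case: (ltnP j m) => hj.
  have hi : (j < k)%N by lia.
  by exists (Ordinal hi); rewrite /gexp /= hj.
have hi : (j - 2 < k)%N by lia.
exists (Ordinal hi); rewrite /gexp /=.
have -> : (j - 2 < k - r - 1)%N = false by apply/negbTE; rewrite -leqNgt; lia.
lia.
Qed.

Lemma coef_fv v j : (fv v)`_j = \sum_(i < k) v 0 i * (j == ge i)%:R.
Proof. by rewrite coef_sum; apply: eq_bigr => i _; rewrite coefZ coefXn. Qed.

Lemma coef_fv_ge v (i : 'I_k) : (fv v)`_(ge i) = v 0 i.
Proof.
rewrite coef_fv (bigD1 i) //= eqxx mulr1 big1 ?addr0 // => l hl.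
have -> : (ge i == ge l) = false.
  by apply/negbTE; apply: contra hl => /eqP /gexp_inj h; apply/eqP/val_inj.
by rewrite mulr0.
Qed.

Lemma coef_fv_out v j : (forall i : 'I_k, ge i != j) -> (fv v)`_j = 0.
Proof. by move=> H; rewrite coef_fv big1 // => i _; rewrite eq_sym (negbTE (H i)) mulr0. Qed.

Lemma size_fv v : (size (fv v) <= k + 2)%N.
Proof.
apply/leq_sizeP => j hj; apply: coef_fv_out => i.
by have := gexp_lt i; apply: contraTneq => ->; rewrite -leqNgt.
Qed.

Lemma mulG v j : (v *m G) 0 j = (fv v).[alpha j].
Proof.
rewrite !mxE horner_sum; apply: eq_bigr => i _.
by rewrite !mxE hornerZ hornerXn.
Qed.

Lemma poly_zero (f : {poly F}) : (size f <= k + 2)%N -> (forall j, f.[alpha j] = 0) -> f = 0.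
Proof.
move=> sf H; apply/eqP/negPn/negP => nz.
have := @max_poly_roots _ f [seq alpha j | j <- enum 'I_n] nz.
rewrite map_inj_uniq // enum_uniq size_map size_enum_ord.
have -> : all (root f) [seq alpha j | j <- enum 'I_n].
  by apply/allP => x /mapP [j _ ->]; rewrite rootE H.
by move=> /(_ isT isT); rewrite ltnNge (leq_trans sf hkn).
Qed.

Lemma fv_eq0 v : fv v = 0 -> v = 0.
Proof. by move=> H; apply/rowP => i; rewrite -coef_fv_ge H coef0 !mxE. Qed.

Lemma cw_neq0 (v : 'rV[F]_k) : v != 0 -> v *m G != 0.
Proof.
apply: contraNneq => h; apply/eqP/fv_eq0/poly_zero; first exact: size_fv.
by move=> j; rewrite -mulG h mxE.
Qed.

Lemma rankG : \rank G = k.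
Proof.
have : row_free G.
  rewrite -kermx_eq0; apply/negPn/negP => /rowV0Pn [v /sub_kermxP h nz].
  by move: (cw_neq0 v nz); rewrite h eqxx.
by move/eqP.
Qed.

Definition PS (S : {set 'I_n}) : {poly F} := \prod_(i in S) ('X - (alpha i)%:P).

Lemma PS_eq (S : {set 'I_n}) : \prod_(z <- [seq alpha i | i <- enum S]) ('X - z%:P) = PS S.
Proof. by rewrite big_map big_enum. Qed.

Lemma PS_size (S : {set 'I_n}) : size (PS S) = #|S|.+1.
Proof. by rewrite -PS_eq size_prod_XsubC size_map -cardE. Qed.

Lemma PS_monic (S : {set 'I_n}) : PS S \is monic.
Proof. by rewrite -PS_eq monic_prod_XsubC. Qed.

Lemma PS_root (S : {set 'I_n}) j : j \in S -> (PS S).[alpha j] = 0.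
Proof. by move=> jS; rewrite horner_prod (bigD1 j) //= hornerXsubC subrr mul0r. Qed.

Definition Dq (S : {set 'I_n}) := elsym alpha S r.+1 ^+ 2 - elsym alpha S r * elsym alpha S r.+2.

Lemma Dform (S : {set 'I_n}) : #|S| = k ->
  Dq S = (PS S)`_m ^+ 2 - (PS S)`_m.+1 * ('X * PS S)`_m.
Proof.
move=> cS.
rewrite /Dq /PS coefXM !coef_prodS ?cS; try lia.
have -> : (k - m = r.+1)%N by lia.
have -> : (k - m.+1 = r)%N by lia.
have ez : (if m == 0%N then 0 else (-1) ^+ (k - m.-1) * elsym alpha S (k - m.-1))
          = (-1) ^+ r.+2 * elsym alpha S r.+2.
  case: eqP => hm.
    by rewrite elsym_big ?mulr0 // cS; lia.
  by have -> : (k - m.-1 = r.+2)%N by lia.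
rewrite ez.
have ss : (-1) ^+ r * (-1) ^+ r = 1 :> F.
  by rewrite -exprD addnn -mul2n exprM expr2 mulrNN mulr1 expr1n.
rewrite !exprS; set e1 := elsym _ _ r.+1; set e0 := elsym _ _ r; set e2 := elsym _ _ r.+2.
transitivity (e1 ^+ 2 * ((-1) ^+ r * (-1) ^+ r) - e0 * e2 * ((-1) ^+ r * (-1) ^+ r)).
  by rewrite ss !mulr1.
ring.
Qed.

Lemma vanish_D (v : 'rV[F]_k) (S : {set 'I_n}) : v != 0 -> #|S| = k ->
  (forall j, j \in S -> (v *m G) 0 j = 0) -> Dq S = 0.
Proof.
move=> vn0 cS vS.
have fn0 : fv v != 0 by apply: contraNneq vn0 => /fv_eq0 ->.
have [q fq] : exists q, fv v = q * PS S.
  rewrite -PS_eq; apply: uniq_roots_prod_XsubC.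
    apply/allP => x /mapP [j jS ->]; rewrite mem_enum in jS.
    by rewrite rootE -mulG vS.
  by rewrite uniq_rootsE map_inj_uniq // enum_uniq.
have qn0 : q != 0 by apply: contraNneq fn0 => q0; rewrite fq q0 mul0r.
have sq : (size q <= 2)%N.
  have := size_fv v; rewrite fq size_Mmonic ?PS_monic // PS_size cS => h.
  lia.
have fE : fv v = (q`_0)%:P * PS S + (q`_1)%:P * ('X * PS S).
  by rewrite fq {1}(@poly_le2 _ _ sq) mulrDl mulrA.
have e1 : q`_0 * (PS S)`_m + q`_1 * ('X * PS S)`_m = 0.
  by have := coef_fv_out v m (fun i => gexp_m i); rewrite fE coefD !coefCM.
have e2 : q`_0 * (PS S)`_m.+1 + q`_1 * (PS S)`_m = 0.
  have := coef_fv_out v m.+1 (fun i => gexp_m1 i).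
  by rewrite fE coefD !coefCM coefXM.
have qq : (q`_0 != 0) || (q`_1 != 0).
  apply: contraNT qn0; rewrite negb_or !negbK => /andP[/eqP h0 /eqP h1].
  by rewrite (@poly_le2 _ _ sq) h0 h1 mul0r addr0.
rewrite Dform //.
move: e1 e2; set x := (PS S)`_m; set y := (PS S)`_m.+1; set z := ('X * PS S)`_m.
move=> e1 e2.
case/orP: qq => h.
  apply: (mulfI h); rewrite mulr0.
  transitivity (x * (q`_0 * x + q`_1 * z) - z * (q`_0 * y + q`_1 * x)); first ring.
  by rewrite e1 e2; ring.
apply: (mulfI h); rewrite mulr0.
transitivity (x * (q`_0 * y + q`_1 * x) - y * (q`_0 * x + q`_1 * z)); first ring.
by rewrite e1 e2; ring.
Qed.

Lemma D_vanish (S : {set 'I_n}) : #|S| = k -> Dq S = 0 ->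
  exists2 v : 'rV[F]_k, v != 0 & forall j, j \in S -> (v *m G) 0 j = 0.
Proof.
move=> cS D0; rewrite Dform // in D0.
move: D0; set x := (PS S)`_m; set y := (PS S)`_m.+1; set z := ('X * PS S)`_m.
move=> D0.
pose a := if (x == 0) && (y == 0) then 1 else x.
pose b := if (x == 0) && (y == 0) then 0 else - y.
have e1 : a * x + b * z = 0.
  rewrite /a /b; case: ifP => [/andP[/eqP hx _]|_]; first by rewrite hx; ring.
  by transitivity (x ^+ 2 - y * z); first ring.
have e2 : a * y + b * x = 0.
  rewrite /a /b; case: ifP => [/andP[/eqP hx /eqP hy]|_]; first by rewrite hx hy; ring.
  ring.
have ab : (a != 0) || (b != 0).
  rewrite /a /b; case: ifP => [_|]; first by rewrite oner_eq0.
  move/negbT; rewrite negb_and => /orP [hx|hy]; first by rewrite hx.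
  by rewrite oppr_eq0 hy orbT.
pose f := a%:P * PS S + b%:P * ('X * PS S).
have fm : f`_m = 0 by rewrite /f coefD !coefCM; exact: e1.
have fm1 : f`_m.+1 = 0 by rewrite /f coefD !coefCM coefXM /=; exact: e2.
have sf : (size f <= k + 2)%N.
  rewrite /f !mul_polyC; apply: leq_trans (size_polyD _ _) _.
  rewrite geq_max; apply/andP; split.
    by apply: leq_trans (size_scale_leq _ _) _; rewrite PS_size cS addn2.
  apply: leq_trans (size_scale_leq _ _) _; apply: leq_trans (size_mul_leq _ _) _.
  by rewrite size_polyX PS_size cS addn2.
pose v : 'rV[F]_k := \row_(i < k) f`_(ge i).
have fvE : fv v = f.
  apply/polyP => j.
  case: (boolP [exists i : 'I_k, ge i == j]) => [/existsP [i /eqP <-]|].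
    by rewrite coef_fv_ge mxE.
  rewrite negb_exists => /forallP hj.
  rewrite coef_fv_out //.
  case: (eqVneq j m) => [->|jm]; first by rewrite fm.
  case: (eqVneq j m.+1) => [->|jm1]; first by rewrite fm1.
  case: (ltnP j (k + 2)) => jl.
    by have [i hi] := gexp_surj j jl jm jm1; move: (hj i); rewrite hi eqxx.
  by rewrite nth_default //; apply: leq_trans sf jl.
exists v.
  apply/eqP => v0.
  have f0 : f = 0.
    rewrite -fvE v0; apply/polyP => j; rewrite coef_fv big1 ?coef0 // => i _.
    by rewrite mxE mul0r.
  have Pk : (PS S)`_k = 1.
    by have := PS_monic S; move/monicP; rewrite lead_coefE PS_size cS.
  have Pk1 : (PS S)`_k.+1 = 0 by rewrite nth_default // PS_size cS.
  have hb : b = 0.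
    have := congr1 (fun p : {poly F} => p`_k.+1) f0.
    by rewrite /= /f coefD !coefCM coefXM /= Pk1 Pk coef0 mulr0 add0r mulr1.
  have ha : a = 0.
    have := congr1 (fun p : {poly F} => p`_k) f0.
    by rewrite /= /f coefD !coefCM hb mul0r addr0 Pk mulr1 coef0.
  by move: ab; rewrite ha hb eqxx.
move=> j jS; rewrite mulG fvE /f hornerD !hornerM !hornerC hornerX PS_root //.
by rewrite !mulr0 addr0.
Qed.

Lemma exists_low : exists2 c : 'rV[F]_n,
  (c <= G)%MS && (c != 0) & (wt c <= n - k + 1)%N.
Proof.
have le : (k.-1 <= n)%N by lia.
pose h (j : 'I_k.-1) : 'I_n := widen_ord le j.
pose M : 'M[F]_(k, k.-1) := \matrix_(i, j) G i (h j).
have : kermx M != 0.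
  apply/eqP => K0; have := mxrank_ker M; rewrite K0 mxrank0 => h0.
  have := rank_leq_col M; lia.
case/rowV0Pn => v /sub_kermxP vM vn0.
exists (v *m G); first by rewrite submxMl cw_neq0.
have hz j : (v *m G) 0 (h j) = 0.
  have : (v *m M) 0 j = 0 by rewrite vM mxE.
  move=> <-; rewrite !mxE; apply: eq_bigr => i _; by rewrite !mxE.
have hinj : injective h.
  by move=> x1 x2 /(congr1 val) /= /val_inj.
rewrite /wt.
have sub : [set i | (v *m G) 0 i != 0] \subset ~: (h @: setT).
  apply/subsetP => i; rewrite !inE; apply: contra => /imsetP [j _ ->].
  by rewrite hz.
apply: leq_trans (subset_leq_card sub) _.
have := cardsC (h @: setT); rewrite card_imset // cardsT !card_ord => e.
lia.
Qed.

Lemma main_iff : is_MDS G <-> (forall S : {set 'I_n}, #|S| = k ->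
  elsym alpha S r.+1 ^+ 2 - elsym alpha S r * elsym alpha S r.+2 != 0).
Proof.
rewrite /is_MDS rankG; split.
  move=> md S cS; apply/negP => /eqP D0.
  have [v vn0 vS] := D_vanish S cS D0.
  have hmin : (min_dist G <= wt (v *m G))%N.
    apply: (@min_le _ (fun c => (c <= G)%MS && (c != 0)) (@wt F n) n (v *m G)).
    by rewrite submxMl cw_neq0.
  rewrite md in hmin.
  have : (wt (v *m G) <= n - k)%N.
    rewrite /wt.
    have sub : [set i | (v *m G) 0 i != 0] \subset ~: S.
      by apply/subsetP => i; rewrite !inE; apply: contra => iS; rewrite vS.
    apply: leq_trans (subset_leq_card sub) _.
    have := cardsC S; rewrite card_ord cS => e.
    by rewrite -[X in (_ <= X - _)%N]e addKn.
  lia.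
move=> H; apply/eqP; rewrite eqn_leq; apply/andP; split.
  have [c /andP[cG cn0] wc] := exists_low.
  apply: leq_trans wc.
  apply: (@min_le _ (fun c => (c <= G)%MS && (c != 0)) (@wt F n) n c).
  by rewrite cG cn0.
rewrite /min_dist; apply: (big_ind (fun x => n - k + 1 <= x)%N).
- lia.
- by move=> x1 y1 hx hy; rewrite leq_min hx hy.
move=> c /andP[/submxP [v ->] cn0].
have vn0 : v != 0 by apply: contraNneq cn0 => ->; rewrite mul0mx.
rewrite leqNgt; apply/negP => lt.
pose Z := [set j | (v *m G) 0 j == 0].
have cZ : (k <= #|Z|)%N.
  have := cardsC Z; rewrite card_ord.
  have -> : ~: Z = [set j | (v *m G) 0 j != 0] by apply/setP => j; rewrite !inE.
  move: lt; rewrite /wt => lt e; apply: (@arith1 _ _ _ k _ e lt); lia.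
have [S sZ cS] := @sub_card _ _ _ cZ.
have D0 : Dq S = 0.
  apply: (@vanish_D v S vn0 cS) => j /(subsetP sZ); rewrite inE => /eqP.
  done.
by move: (H S cS); rewrite /Dq in D0; rewrite D0 eqxx.
Qed.

End Main.

Theorem theorem3p11 (F : finFieldType) (n k r : nat) (alpha : 'I_n -> F) :
  (3 <= k)%N -> (k <= n - 2)%N -> (n - 2 <= #|F| - 2)%N ->
  (1 <= r)%N -> (r <= k - 1)%N ->
  injective alpha ->
  is_MDS (Gmat k r alpha) <->
  (forall S : {set 'I_n}, #|S| = k ->
     elsym alpha S r.+1 ^+ 2 - elsym alpha S r * elsym alpha S r.+2 != 0).
Proof.
move=> hk hkn hq hr1 hrk ainj.
have hkn2 : (k + 2 <= n)%N by lia.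
exact: (@main_iff F n k r alpha hk hkn2 hr1 hrk ainj).
Qed.
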